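(* Let $f\in\mathcal A$ be such that $$\frac{z}{f(z)}=1+b_1z+\sum_{n=2}^\infty(-1)^nb_nz^n,\qquad z\in\mathbb D,$$ where $b_1\in\mathbb C$ and $b_n\ge0$ for $n\ge2$. Then $f$ is univalent in $\mathbb D$ if and only if $\sum_{n=2}^\infty(n-1)b_n\le 1$.
   Context: $\mathbb D=\{z\in\mathbb C:|z|<1\}$. $\mathcal A$ is the class of functions $f$ analytic in $\mathbb D$ with $f(z)=z+\sum_{k\ge2}a_kz^k$. *)

(* Defs.v *)
From Stdlib Require Import Reals.
From Coquelicot Require Import Coquelicot.
Open Scope C_scope.

Definition in_disk (z : C) : Prop := (Cmod z < 1)%R.

Definition is_cderiv (f : C -> C) (z l : C) : Prop :=
  @is_derive C_AbsRing C_NormedModule f z l.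

Definition analytic_in_disk (f : C -> C) : Prop :=
  forall z, in_disk z -> exists l, is_cderiv f z l.

Definition classA (f : C -> C) : Prop :=
  analytic_in_disk f /\ f 0 = 0 /\ is_cderiv f 0 1.

Definition univalent_in_disk (f : C -> C) : Prop :=
  forall z w, in_disk z -> in_disk w -> f z = f w -> z = w.

(* coefficients of z/f(z) = 1 + b1 z + sum_{n>=2} (-1)^n b_n z^n *)
Definition zf_coef (b1 : C) (b : nat -> R) (n : nat) : C :=
  match n with
  | O => 1
  | S O => b1
  | _ => RtoC ((-1) ^ n * b n)%R
  end.

(* Main.v *)
Require Import Defs.
From Stdlib Require Import Reals Lra Lia Psatz.
From Coquelicot Require Import Coquelicot.
Open Scope C_scope.

Lemma Cinv0 : Cinv 0 = 0.
Proof. unfold Cinv; simpl. unfold Rdiv.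
  replace (0 * (0 * 1) + 0 * (0 * 1))%R with 0%R by ring. rewrite Rinv_0.
  apply injective_projections; simpl; ring. Qed.

Lemma div_eq0 (z x : C) : z <> 0 -> z / x = 0 -> x = 0.
Proof. intros Hz H. destruct (Ceq_dec x 0) as [|Hx]; auto.
  exfalso. apply Hz. replace z with ((z / x) * x) by (field; auto). rewrite H; ring. Qed.

Lemma sum_n_C_norm (v : nat -> C) (B : nat -> R) :
  (forall k, Cmod (v k) <= B k) -> forall n, Cmod (sum_n v n) <= sum_n B n.
Proof. intros H n; induction n.
  - rewrite !sum_O. apply H.
  - rewrite !sum_Sn. eapply Rle_trans. apply Cmod_triangle.
    apply Rplus_le_compat; auto. Qed.

Lemma series_C_bound (v : nat -> C) (l : C) (B : nat -> R) (L : R) :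
  is_series v l -> is_series B L -> (forall k, Cmod (v k) <= B k) -> Cmod l <= L.
Proof. intros Hv HB Hle.
  assert (H1 : is_lim_seq (fun n => Cmod (sum_n v n)) (Cmod l)).
  { unfold is_lim_seq. simpl.
    eapply filterlim_comp. apply Hv.
    assert (E : forall x : C, Cmod x = @norm _ C_NormedModule x) by reflexivity.
    rewrite (E l).
    eapply filterlim_ext. intros x; symmetry; apply E. apply filterlim_norm. }
  assert (H2 : is_lim_seq (sum_n B) L) by exact HB.
  apply (is_lim_seq_le _ _ _ _ (sum_n_C_norm v B Hle) H1 H2). Qed.

Lemma Cpow_diff (a c : C) (k : nat) : Cmod a <= 1 -> Cmod c <= 1 ->
  Cmod (Cpow a k - Cpow c k) <= INR k * Cmod (a - c).
Proof. intros Ha Hc. induction k.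
  - simpl. replace (1 - 1) with (RtoC 0) by ring. rewrite Cmod_0. lra.
  - replace (Cpow a (S k) - Cpow c (S k)) with (a * (Cpow a k - Cpow c k) + (a - c) * Cpow c k)
      by (simpl; ring).
    eapply Rle_trans. apply Cmod_triangle. rewrite !Cmod_mult, Cmod_pow, S_INR.
    assert (0 <= Cmod c ^ k <= 1). { split. apply pow_le, Cmod_ge_0. rewrite <- (pow1 k). apply pow_incr. split; auto. apply Cmod_ge_0. }
    assert (0 <= Cmod (a - c)) by apply Cmod_ge_0.
    assert (0 <= Cmod a) by apply Cmod_ge_0.
    assert (0 <= Cmod (Cpow a k - Cpow c k)) by apply Cmod_ge_0.
    nra. Qed.

Lemma key (b1 : C) (b : nat -> R) (z w gz gw : C) :
  (forall n, (2 <= n)%nat -> (0 <= b n)%R) ->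
  ex_series (fun n : nat => (INR (n + 1) * b (n + 2)%nat)%R) ->
  (Series (fun n : nat => (INR (n + 1) * b (n + 2)%nat)%R) <= 1)%R ->
  Cmod z < 1 -> Cmod w < 1 ->
  is_series (fun n => zf_coef b1 b n * Cpow z n) gz ->
  is_series (fun n => zf_coef b1 b n * Cpow w n) gw ->
  Cmod (z * gw - w * gz - (z - w)) <= Cmod z * Cmod w * Cmod (z - w).
Proof. intros Hb Hex HS Hz Hw Hgz Hgw.
  set (u := fun n => z * (zf_coef b1 b n * Cpow w n) - w * (zf_coef b1 b n * Cpow z n)).
  assert (Hu : is_series u (z * gw - w * gz)).
  { apply (is_series_minus _ _ _ _ (is_series_scal z _ _ Hgw) (is_series_scal w _ _ Hgz)). }
  assert (Hv : is_series (fun k => u (2 + k)%nat) (z * gw - w * gz - (z - w))).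
  { apply is_series_incr_n. lia. simpl. rewrite sum_Sn, sum_O.
    match goal with |- is_series _ ?L => replace L with (z * gw - w * gz) end.
    exact Hu. unfold u; simpl. unfold plus; simpl. ring. }
  set (M := (Cmod z * Cmod w * Cmod (z - w))%R).
  assert (HM : 0 <= M). { unfold M. pose proof (Cmod_ge_0 z). pose proof (Cmod_ge_0 w).
    pose proof (Cmod_ge_0 (z-w)). apply Rmult_le_pos; auto. apply Rmult_le_pos; auto. }
  set (SS := Series (fun n : nat => (INR (n + 1) * b (n + 2)%nat)%R)).
  assert (HB : is_series (fun n => (M * (INR (n + 1) * b (n + 2)%nat))%R) (M * SS)%R).
  { apply (is_series_scal_l M _ _ (Series_correct _ Hex)). }
  assert (Hc : Cmod (z * gw - w * gz - (z - w)) <= M * SS).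
  { apply (series_C_bound _ _ _ _ Hv HB). intros k.
    unfold u. rewrite (Nat.add_comm 2 k).
    replace (zf_coef b1 b (k + 2)) with (RtoC ((-1) ^ (k + 2) * b (k + 2)%nat))
      by (replace (k + 2)%nat with (S (S k)) by lia; reflexivity).
    replace (z * (RtoC ((-1) ^ (k + 2) * b (k + 2)%nat) * Cpow w (k + 2)) -
             w * (RtoC ((-1) ^ (k + 2) * b (k + 2)%nat) * Cpow z (k + 2)))
      with (RtoC ((-1) ^ (k + 2) * b (k + 2)%nat) * (z * w) * (Cpow w (k + 1) - Cpow z (k + 1)))
      by (replace (k + 2)%nat with (S (k + 1)) by lia; simpl; ring).
    rewrite !Cmod_mult, Cmod_R, Rabs_mult, pow_1_abs, Rmult_1_l, Rabs_pos_eq by (apply Hb; lia).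
    pose proof (Cpow_diff w z (k + 1) (Rlt_le _ _ Hw) (Rlt_le _ _ Hz)).
    replace (Cmod (w - z)) with (Cmod (z - w)) in H
      by (replace (w - z) with (- (z - w)) by ring; symmetry; apply Cmod_opp).
    assert (0 <= b (k + 2)%nat) by (apply Hb; lia).
    unfold M. pose proof (Cmod_ge_0 z). pose proof (Cmod_ge_0 w).
    assert (0 <= Cmod z * Cmod w) by (apply Rmult_le_pos; auto).
    assert (H2x : 0 <= b (k + 2)%nat * (Cmod z * Cmod w)) by (apply Rmult_le_pos; auto).
    pose proof (Rmult_le_compat_l _ _ _ H2x H) as H3x.
    replace (Cmod z * Cmod w * Cmod (z - w) * (INR (k + 1) * b (k + 2)%nat))%R
      with (b (k + 2)%nat * (Cmod z * Cmod w) * (INR (k + 1) * Cmod (z - w)))%R by ring.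
    exact H3x. }
  eapply Rle_trans. apply Hc. fold M. rewrite <- (Rmult_1_r M) at 2.
  apply Rmult_le_compat_l; auto. Qed.

Lemma sqrt2_lt2 : sqrt 2 < 2.
Proof. pose proof (sqrt_pos 2). pose proof (sqrt_sqrt 2 ltac:(lra)). nra. Qed.

Lemma cont_small (f : C -> C) (w : C) (l : C) : is_cderiv f w l -> f w = 0 ->
  exists d : posreal, forall z, Cmod (z - w) < d -> Cmod (f z) < 2.
Proof. intros Hd Hw0.
  pose proof (@ex_derive_continuous C_AbsRing C_NormedModule f w ltac:(exists l; exact Hd)) as Hc.
  assert (H1 : 0 < 1) by lra.
  destruct (Hc (ball (f w) (mkposreal 1 H1)) (locally_ball _ _)) as [d Hdl].
  exists d. intros z Hz. assert (Hb : @ball (AbsRing_UniformSpace C_AbsRing) w d z).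
  { unfold ball; simpl. unfold AbsRing_ball. unfold abs, minus, plus, opp; simpl. exact Hz. }
  pose proof (C_NormedModule_mixin_compat2 _ _ _ (Hdl z Hb)) as H2.
  rewrite Hw0 in H2. simpl in H2.
  match type of H2 with Cmod ?X < _ => replace X with (f z) in H2 by (unfold minus, plus, opp; simpl; ring) end.
  pose proof sqrt2_lt2. lra. Qed.

Section Suff.
Variables (f : C -> C) (b1 : C) (b : nat -> R).
Hypothesis HA : classA f.
Hypothesis Hb : forall n : nat, (2 <= n)%nat -> (0 <= b n)%R.
Hypothesis Hs : forall z : C, in_disk z -> z <> 0 ->
     is_series (fun n : nat => zf_coef b1 b n * Cpow z n) (z / f z).
Hypothesis Hex : ex_series (fun n : nat => (INR (n + 1) * b (n + 2)%nat)%R).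
Hypothesis HS : (Series (fun n : nat => (INR (n + 1) * b (n + 2)%nat)%R) <= 1)%R.

Lemma NZ : forall w, in_disk w -> w <> 0 -> f w <> 0.
Proof. intros w Hw Hw0 Hfw.
  destruct HA as [Han [Hf0 Hd0]].
  destruct (Han w Hw) as [l Hl].
  destruct (cont_small f w l Hl Hfw) as [d Hd].
  assert (Hwp : 0 < Cmod w) by (apply Cmod_gt_0; auto).
  unfold in_disk in Hw.
  set (t := Rmin (d / 2) (Cmod w / 10)).
  assert (Ht1 : 0 < t) by (unfold t; apply Rmin_glb_lt; pose proof (cond_pos d); lra).
  assert (Ht2 : t <= d / 2) by apply Rmin_l.
  assert (Ht3 : t <= Cmod w / 10) by apply Rmin_r.
  set (z := w * RtoC (1 - t)).
  assert (Hzw : Cmod (z - w) = (Cmod w * t)%R).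
  { unfold z. replace (w * RtoC (1 - t) - w) with (w * RtoC (- t)) by (rewrite RtoC_minus, RtoC_opp; ring).
    rewrite Cmod_mult, Cmod_R, Rabs_Ropp, Rabs_pos_eq; lra. }
  assert (Hz : Cmod z = (Cmod w * (1 - t))%R).
  { unfold z. rewrite Cmod_mult, Cmod_R, Rabs_pos_eq; lra. }
  assert (Hzd : in_disk z) by (unfold in_disk; rewrite Hz; nra).
  assert (Hz0 : z <> 0) by (intro E; rewrite E, Cmod_0 in Hz; nra).
  assert (Hfz : Cmod (f z) < 2) by (apply Hd; rewrite Hzw; pose proof (cond_pos d); nra).
  pose proof (key b1 b z w (z / f z) (w / f w) Hb Hex HS Hzd Hw (Hs z Hzd Hz0) (Hs w Hw Hw0)) as K.
  rewrite Hfw in K. replace (w / 0) with (RtoC 0) in K by (unfold Cdiv; rewrite Cinv0; ring).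
  replace (z * 0 - w * (z / f z) - (z - w)) with (- (w * (z / f z) + (z - w))) in K by ring.
  rewrite Cmod_opp in K.
  pose proof (Cmod_triangle (w * (z / f z) + (z - w)) (- (z - w))) as T.
  replace (w * (z / f z) + (z - w) + - (z - w)) with (w * (z / f z)) in T by ring.
  rewrite Cmod_opp in T.
  destruct (Ceq_dec (f z) 0) as [Hf | Hf].
  - assert (E0 : z / f z = 0) by (rewrite Hf; unfold Cdiv; rewrite Cinv0; ring).
    rewrite E0 in K. replace (w * 0 + (z - w)) with (z - w) in K by ring.
    rewrite Hzw, Hz in *.
    assert (Cmod w * (1 - t) * Cmod w < 1) by nra.
    assert (0 < Cmod w * t) by nra.
    pose proof (Rmult_lt_compat_r _ _ _ H0 H). lra.
  - rewrite Cmod_mult, Cmod_div in T by auto.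
    assert (Hfp : 0 < Cmod (f z)) by (apply Cmod_gt_0; auto).
    set (q := (Cmod z / Cmod (f z))%R) in T.
    assert (Eq : Cmod z = (q * Cmod (f z))%R) by (unfold q; field; lra).
    rewrite Hzw, Hz in *.
    assert (Hq : 0 <= q) by (unfold q; apply Rdiv_le_0_compat; [apply Cmod_ge_0 | lra]).
    assert (Cmod w * (1 - t) * Cmod w <= 1) by nra.
    assert (0 <= Cmod w * t) by nra.
    assert (Cmod w * (1 - t) * Cmod w * (Cmod w * t) <= Cmod w * t).
    { pose proof (Rmult_le_compat_r _ _ _ H0 H). lra. }
    assert (Cmod w * q <= 2 * (Cmod w * t)) by lra.
    assert (0 < Cmod w * (1 - t)) by nra.
    assert (0 < q) by nra.
    assert (Cmod w * (1 - t) < 2 * q) by nra.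
    assert (Cmod w * (Cmod w * (1 - t)) < Cmod w * (2 * q)) by (apply Rmult_lt_compat_l; lra).
    nra. Qed.

Lemma suff : univalent_in_disk f.
Proof. intros z w Hz Hw Hfzw.
  destruct (Ceq_dec z w) as [|Hne]; auto. exfalso.
  destruct HA as [Han [Hf0 Hd0]].
  destruct (Ceq_dec z 0) as [Ez|Hz0].
  { subst z. apply (NZ w Hw); auto. rewrite <- Hfzw; auto. }
  destruct (Ceq_dec w 0) as [Ew|Hw0].
  { subst w. apply (NZ z Hz); auto. rewrite Hfzw; auto. }
  pose proof (key b1 b z w (z / f z) (w / f w) Hb Hex HS Hz Hw (Hs z Hz Hz0) (Hs w Hw Hw0)) as K.
  pose proof (NZ z Hz Hz0) as Hfz.
  rewrite <- Hfzw in K.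
  replace (z * (w / f z) - w * (z / f z) - (z - w)) with (- (z - w)) in K by (field; auto).
  rewrite Cmod_opp in K. unfold in_disk in *.
  assert (0 < Cmod (z - w)) by (apply Cmod_gt_0; intro E; apply Hne;
    replace z with ((z - w) + w) by ring; rewrite E; ring).
  pose proof (Cmod_ge_0 z). pose proof (Cmod_ge_0 w).
  assert (Cmod z * Cmod w < 1) by nra. nra. Qed.
End Suff.

Lemma sum_n_RtoC (v : nat -> R) n : sum_n (fun k => RtoC (v k)) n = RtoC (sum_n v n).
Proof. induction n. rewrite !sum_O; auto.
  rewrite !sum_Sn, IHn. unfold plus; simpl. rewrite RtoC_plus. reflexivity. Qed.

Lemma series_RtoC (v : nat -> R) (L : C) :
  is_series (fun k => RtoC (v k)) L -> is_series v (fst L) /\ snd L = 0%R.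
Proof. intros H. unfold is_series in H.
  assert (HB : forall eps : posreal, eventually (fun n => ball L eps (RtoC (sum_n v n)))).
  { intros eps. specialize (H _ (locally_ball L eps)). unfold filtermap in H.
    destruct H as [N HN]. exists N. intros n Hn. rewrite <- sum_n_RtoC. apply HN; auto. }
  split.
  - unfold is_series. intros P [eps HP]. destruct (HB eps) as [N HN]. exists N.
    intros n Hn. apply HP. destruct (HN n Hn) as [H1 H2]. exact H1.
  - apply Rle_antisym; apply Rnot_lt_le; intro Hlt.
    + assert (Hp : 0 < snd L) by lra. destruct (HB (mkposreal _ Hp)) as [N HN].
      destruct (HN N (le_n _)) as [_ H2]. simpl in H2. unfold ball in H2; simpl in H2.
      unfold AbsRing_ball, abs, minus, plus, opp in H2; simpl in H2.
      rewrite Rplus_0_l, Rabs_Ropp, Rabs_pos_eq in H2; lra.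
    + assert (Hp : 0 < - snd L) by lra. destruct (HB (mkposreal _ Hp)) as [N HN].
      destruct (HN N (le_n _)) as [_ H2]. simpl in H2. unfold ball in H2; simpl in H2.
      unfold AbsRing_ball, abs, minus, plus, opp in H2; simpl in H2.
      rewrite Rplus_0_l, Rabs_Ropp, Rabs_left in H2; lra. Qed.

Lemma nonneg_partial_le (v : nat -> R) (l : R) :
  is_series v l -> (forall n, 0 <= v n) -> forall n, sum_n v n <= l.
Proof. intros H Hv. apply is_lim_seq_incr_compare. exact H.
  intros n. rewrite sum_Sn. unfold plus; simpl. specialize (Hv (S n)). lra. Qed.

Lemma nonneg_term_le (v : nat -> R) (l : R) :
  is_series v l -> (forall n, 0 <= v n) -> forall n, v n <= l.
Proof. intros H Hv n. eapply Rle_trans. 2: apply (nonneg_partial_le v l H Hv n).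
  destruct n. rewrite sum_O; lra. rewrite sum_Sn. unfold plus; simpl.
  assert (0 <= sum_n v n). { clear H. induction n. rewrite sum_O; auto. rewrite sum_Sn. unfold plus; simpl.
   specialize (Hv (S n)). lra. }
  lra. Qed.

Section Nec.
Variables (f : C -> C) (b1 : C) (b : nat -> R).
Hypothesis HA : classA f.
Hypothesis Hb : forall n : nat, (2 <= n)%nat -> (0 <= b n)%R.
Hypothesis Hs : forall z : C, in_disk z -> z <> 0 ->
     is_series (fun n : nat => zf_coef b1 b n * Cpow z n) (z / f z).

Definition a (n : nat) : R := match n with 0%nat | 1%nat => 0%R | _ => b n end.

Lemma a_nonneg n : 0 <= a n.
Proof. destruct n as [|[|n]]; simpl; try lra. apply Hb. lia. Qed.

Lemma Gval (s : R) : 0 < s < 1 ->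
  RtoC (-s) / f (RtoC (-s)) = 1 + b1 * RtoC (-s) + RtoC (PSeries a s) /\
  is_pseries a s (PSeries a s).
Proof. intros Hs01. set (z := RtoC (-s)).
  assert (Hz : in_disk z). { unfold in_disk, z. rewrite Cmod_R, Rabs_Ropp, Rabs_pos_eq; lra. }
  assert (Hz0 : z <> 0). { unfold z. intro E. apply (f_equal fst) in E. simpl in E. lra. }
  pose proof (Hs z Hz Hz0) as H.
  set (u := fun n => zf_coef b1 b n * Cpow z n) in H.
  set (T := z / f z - (1 + b1 * z)).
  assert (H2 : is_series (fun k => u (2 + k)%nat) T).
  { apply is_series_incr_n. lia. simpl. rewrite sum_Sn, sum_O.
    match goal with |- is_series _ ?L => replace L with (z / f z) end.
    exact H. unfold u, T; simpl. unfold plus; simpl. ring. }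
  assert (H3 : is_series (fun k => RtoC (b (2 + k)%nat * s ^ (2 + k))) T).
  { eapply is_series_ext. 2: exact H2. intros k. unfold u. 
    change (zf_coef b1 b (2 + k)) with (RtoC ((-1) ^ (2 + k) * b (2 + k)%nat)).
    unfold z. rewrite <- RtoC_pow, <- RtoC_mult. f_equal.
    replace ((-1) ^ (2 + k) * b (2 + k)%nat * (-s) ^ (2 + k))%R
      with (b (2 + k)%nat * ((-1) * (-s)) ^ (2 + k))%R by (rewrite Rpow_mult_distr; ring).
    f_equal. f_equal. ring. }
  destruct (series_RtoC _ _ H3) as [H4 H5].
  assert (H6 : is_pseries a s (fst T)).
  { apply is_pseries_R. apply (is_series_decr_n _ 2). lia.
    match goal with |- is_series _ ?L => replace L with (fst T) end.
    eapply is_series_ext. 2: exact H4. intros k. simpl. reflexivity.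
    simpl. rewrite sum_Sn, sum_O. unfold plus, opp; simpl. ring. }
  assert (HP : PSeries a s = fst T) by (apply is_pseries_unique; exact H6).
  split. 2: rewrite HP; exact H6.
  rewrite HP. replace (RtoC (fst T)) with T. unfold T; ring.
  apply injective_projections; simpl; auto.
Qed.

Lemma radius (x : R) : Rabs x < 1 -> Rbar_lt (Rabs x) (CV_radius a).
Proof. intros Hx. set (s := ((1 + Rabs x) / 2)%R).
  assert (Hs1 : 0 < s < 1) by (unfold s; pose proof (Rabs_pos x); lra).
  destruct (Gval s Hs1) as [_ Hp].
  assert (Hle : Rbar_le s (CV_radius a)).
  { destruct (CV_radius_bounded a) as [Hub _]. apply Hub.
    exists (PSeries a s). intros n.
    apply is_pseries_R in Hp.
    rewrite Rabs_pos_eq. apply (nonneg_term_le (fun n => a n * s ^ n)%R _ Hp).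
    intros k. apply Rmult_le_pos. apply a_nonneg. apply pow_le; lra.
    apply Rmult_le_pos. apply a_nonneg. apply pow_le; lra. }
  eapply Rbar_lt_le_trans. 2: exact Hle. simpl. unfold s; lra. Qed.

Lemma F_derive (r s : R) : Rabs s < 1 ->
  is_derive (fun t => t * PSeries a r + t - r - r * PSeries a t)%R s
    (PSeries a r + 1 - r * PSeries (PS_derive a) s)%R.
Proof. intros Hs1. pose proof (is_derive_PSeries a s (radius s Hs1)) as HD.
  auto_derive. exists (PSeries (PS_derive a) s). exact HD.
  replace (Derive (fun x : R => PSeries a x) s) with (PSeries (PS_derive a) s) by (symmetry; apply (is_derive_unique _ _ _ HD)). ring. Qed.

Lemma Cinv0' : Cinv 0 = 0.
Proof. unfold Cinv; simpl. unfold Rdiv.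
  replace (0 * (0 * 1) + 0 * (0 * 1))%R with 0%R by ring. rewrite Rinv_0.
  apply injective_projections; simpl; ring. Qed.

Lemma div0 (z : C) : z / 0 = 0.
Proof. unfold Cdiv. rewrite Cinv0'. ring. Qed.

Lemma Cmult_integral (x y : C) : x * y = 0 -> x = 0 \/ y = 0.
Proof. intros H. destruct (Ceq_dec x 0); auto. destruct (Ceq_dec y 0); auto.
  exfalso. apply (Cmult_neq_0 x y); auto. Qed.

Lemma same_value (z w : C) : z <> 0 -> w <> 0 -> z * (w / f w) = w * (z / f z) -> f z = f w.
Proof. intros Hz Hw H. destruct (Ceq_dec (f z) 0) as [Hfz|Hfz].
  - rewrite Hfz, div0, Cmult_0_r in H. rewrite Hfz.
    destruct (Ceq_dec (f w) 0) as [|Hfw]; auto. exfalso.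
    apply Cmult_integral in H. destruct H as [H|H]; auto.
    apply Hw. replace w with (w / f w * f w) by (field; auto). rewrite H. ring.
  - destruct (Ceq_dec (f w) 0) as [Hfw|Hfw].
    + exfalso. rewrite Hfw, div0, Cmult_0_r in H. symmetry in H.
      apply Cmult_integral in H. destruct H as [H|H]; auto.
      apply Hz. replace z with (z / f z * f z) by (field; auto). rewrite H. ring.
    + assert (E : z * w * f z = z * w * f w).
      { replace (z * w * f z) with (z * (w / f w) * (f z * f w)) by (field; auto).
        rewrite H. field; auto. }
      replace (f z) with ((z * w * f z) / (z * w)) by (field; auto).
      rewrite E. field; auto. Qed.

Lemma Dle (Hu : univalent_in_disk f) (r : R) : 0 < r < 1 ->
  (r * PSeries (PS_derive a) r - PSeries a r <= 1)%R.
Proof. intros Hr. apply Rnot_lt_le. intro HD.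
  set (F := (fun t => t * PSeries a r + t - r - r * PSeries a t)%R).
  set (L := (PSeries a r + 1 - r * PSeries (PS_derive a) r)%R).
  assert (HL : L < 0) by (unfold L; lra).
  assert (HF : derivable_pt_lim F r L).
  { apply is_derive_Reals. apply F_derive. rewrite Rabs_pos_eq; lra. }
  assert (HFr : F r = 0%R) by (unfold F; ring).
  assert (HF0 : F 0%R = (- r)%R) by (unfold F; rewrite PSeries_0; simpl; ring).
  destruct (HF (- L)%R ltac:(lra)) as [d Hd].
  set (h := (- Rmin (d / 2) (r / 2))%R).
  assert (Hm1 : 0 < Rmin (d / 2) (r / 2)) by (apply Rmin_glb_lt; pose proof (cond_pos d); lra).
  assert (Hm2 : Rmin (d / 2) (r / 2) <= d / 2) by apply Rmin_l.
  assert (Hm3 : Rmin (d / 2) (r / 2) <= r / 2) by apply Rmin_r.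
  assert (Hh0 : h <> 0%R) by (unfold h; lra).
  assert (Hhd : Rabs h < d) by (unfold h; rewrite Rabs_Ropp, Rabs_pos_eq; pose proof (cond_pos d); lra).
  specialize (Hd h Hh0 Hhd). rewrite HFr in Hd.
  apply Rabs_def2 in Hd. destruct Hd as [Hd1 Hd2].
  set (s1 := (r + h)%R).
  assert (Hs1pos : F s1 > 0).
  { assert (Q : ((F (r + h) - 0) / h < 0)%R) by lra.
    unfold s1. replace (F (r + h)%R) with (((F (r + h) - 0) / h) * h)%R by (field; auto).
    unfold h in *. nra. }
  assert (Hs1r : 0 < s1 < r) by (unfold s1, h; lra).
  destruct (Ranalysis5.IVT_interv F 0 s1) as [s0 [Hs0 HFs0]].
  { intros x Hx. apply continuity_pt_filterlim.
    apply (@ex_derive_continuous R_AbsRing R_NormedModule).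
    eexists. apply F_derive. rewrite Rabs_pos_eq; lra. }
  lra. lra. lra.
  assert (Hs0pos : 0 < s0).
  { destruct (Req_dec s0 0) as [E|E]. rewrite E, HF0 in HFs0. lra. lra. }
  destruct (Gval s0 ltac:(lra)) as [Gz _].
  destruct (Gval r ltac:(lra)) as [Gw _].
  set (z := RtoC (- s0)) in *. set (w := RtoC (- r)) in *.
  assert (Hz : in_disk z). { unfold in_disk, z. rewrite Cmod_R, Rabs_Ropp, Rabs_pos_eq; lra. }
  assert (Hw : in_disk w). { unfold in_disk, w. rewrite Cmod_R, Rabs_Ropp, Rabs_pos_eq; lra. }
  assert (Hz0 : z <> 0). { unfold z. intro E. apply (f_equal fst) in E. simpl in E. lra. }
  assert (Hw0 : w <> 0). { unfold w. intro E. apply (f_equal fst) in E. simpl in E. lra. }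
  assert (Rel : z * (w / f w) = w * (z / f z)).
  { rewrite Gz, Gw. unfold z, w.
    assert (E : RtoC (F s0) = 0) by (rewrite HFs0; reflexivity).
    unfold F in E. rewrite !RtoC_minus, !RtoC_plus, !RtoC_mult in E.
    rewrite !RtoC_opp.
    apply Ceq_minus. match type of E with ?X = _ => transitivity (- X) end; [ring | rewrite E; ring]. }
  pose proof (same_value z w Hz0 Hw0 Rel) as Hfe.
  pose proof (Hu z w Hz Hw Hfe) as Ezw. unfold z, w in Ezw.
  apply (f_equal fst) in Ezw; simpl in Ezw. lra.
Qed.
End Nec.
Section FinS.
Local Open Scope R_scope.

Section Fin.
Variables (f : C -> C) (b1 : C) (b : nat -> R).
Hypothesis Hb : forall n : nat, (2 <= n)%nat -> (0 <= b n)%R.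
Hypothesis Hs : forall z : C, in_disk z -> z <> 0%C ->
     is_series (fun n : nat => (zf_coef b1 b n * Cpow z n)%C) (z / f z)%C.
Hypothesis Hu : univalent_in_disk f.

Let w1 (n : nat) : R := (INR n - 1) * a b n.

Lemma w1_nonneg n : 0 <= w1 n.
Proof. unfold w1. destruct n as [|[|n]]; simpl a; try lra.
  apply Rmult_le_pos. rewrite !S_INR. pose proof (pos_INR n). lra. apply Hb; lia. Qed.

Lemma Dseries (r : R) : 0 < r < 1 ->
  is_series (fun n => w1 n * r ^ n) (r * PSeries (PS_derive (a b)) r - PSeries (a b) r).
Proof. intros Hr.
  assert (Hrad : Rbar_lt (Rabs r) (CV_radius (a b))) by (apply (radius f b1 b Hb Hs); rewrite Rabs_pos_eq; lra).
  pose proof (PSeries_correct _ _ (ex_pseries_derive _ _ Hrad)) as H1.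
  apply is_pseries_R in H1.
  pose proof (PSeries_correct _ _ (CV_radius_inside _ _ Hrad)) as H2.
  apply is_pseries_R in H2.
  assert (H3 : is_series (fun n => INR n * a b n * r ^ n) (r * PSeries (PS_derive (a b)) r)).
  { apply is_series_decr_1. simpl. 
    pose proof (is_series_scal_l r _ _ H1) as H4.
    match goal with |- is_series _ ?L => replace L with (r * PSeries (PS_derive (a b)) r) end.
    eapply is_series_ext. 2: exact H4. intros n. unfold PS_derive, scal; simpl.
    unfold mult; simpl. ring.
    unfold plus, opp; simpl. ring. }
  pose proof (is_series_minus _ _ _ _ H3 H2) as H5.
  eapply is_series_ext. 2: exact H5. intros n. unfold plus, opp, w1; simpl. ring. Qed.

Lemma partial_r (r : R) (N : nat) : 0 < r < 1 -> sum_n (fun n => w1 n * r ^ n) N <= 1.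
Proof. intros Hr. eapply Rle_trans.
  apply (nonneg_partial_le _ _ (Dseries r Hr)).
  intros n. apply Rmult_le_pos. apply w1_nonneg. apply pow_le; lra.
  apply (Dle f b1 b Hb Hs Hu r Hr). Qed.

Lemma sum_nonneg N : 0 <= sum_n w1 N.
Proof. induction N. rewrite sum_O. apply w1_nonneg. rewrite sum_Sn. unfold plus; simpl.
  pose proof (w1_nonneg (S N)). lra. Qed.

Lemma pow_compare (r : R) (N : nat) : 0 < r <= 1 ->
  r ^ N * sum_n w1 N <= sum_n (fun n => w1 n * r ^ n) N.
Proof. intros Hr. induction N.
  - rewrite !sum_O. simpl. lra.
  - rewrite !sum_Sn. unfold plus; simpl.
    pose proof (sum_nonneg N). pose proof (w1_nonneg (S N)).
    assert (0 <= r ^ N) by (apply pow_le; lra).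
    assert (r * r ^ N <= r ^ N) by nra.
    assert (r * r ^ N * sum_n w1 N <= r ^ N * sum_n w1 N).
    { apply Rmult_le_compat_r; auto. }
    nra. Qed.

Lemma bernoulli (r : R) (N : nat) : 0 <= r <= 1 -> 1 - INR N * (1 - r) <= r ^ N.
Proof. intros Hr. induction N. simpl. lra.
  rewrite S_INR. simpl. pose proof (pos_INR N).
  assert (r * (1 - INR N * (1 - r)) <= r * r ^ N) by (apply Rmult_le_compat_l; lra).
  assert (INR N * (1 - r) * r <= INR N * (1 - r)) by (rewrite <- (Rmult_1_r (INR N * (1 - r))) at 2; apply Rmult_le_compat_l; nra).
  nra. Qed.

Lemma partial_1 (N : nat) : sum_n w1 N <= 1.
Proof. apply Rnot_lt_le. intro H. set (S := sum_n w1 N) in *.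
  set (e := (S - 1) / (2 * S * (INR N + 1))).
  pose proof (pos_INR N).
  assert (He : 0 < e) by (unfold e; apply Rdiv_lt_0_compat; nra).
  assert (He2 : e * (2 * S * (INR N + 1)) = S - 1) by (unfold e; field; nra).
  assert (He3 : e < 1). { assert (S - 1 < 2 * S * (INR N + 1)) by nra. nra. }
  pose proof (pow_compare (1 - e) N ltac:(lra)).
  pose proof (partial_r (1 - e) N ltac:(lra)).
  pose proof (bernoulli (1 - e) N ltac:(lra)).
  fold S in H1.
  assert ((1 - INR N * (1 - (1 - e))) * S <= (1 - e) ^ N * S) by (apply Rmult_le_compat_r; lra).
  nra. Qed.

Lemma shift (M : nat) : sum_n w1 (M + 2) = sum_n (fun n => INR (n + 1) * b (n + 2)%nat) M.
Proof. induction M.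
  - simpl. rewrite sum_Sn, sum_Sn, !sum_O. unfold plus, w1; simpl. ring.
  - replace (S M + 2)%nat with (S (M + 2)) by lia. rewrite !sum_Sn, IHM.
    unfold plus, w1; simpl. f_equal.
    replace (M + 2)%nat with (S (S M)) by lia. replace (S M + 2)%nat with (S (S (S M))) by lia.
    replace (S M + 1)%nat with (S (S M)) by lia. simpl a.
    change (match (M + 1)%nat with 0%nat => 1 | S _ => INR (M + 1) + 1 end) with (INR (S (M + 1))).
    rewrite !S_INR, plus_INR. simpl. ring. Qed.

Lemma necessity :
  ex_series (fun n : nat => (INR (n + 1) * b (n + 2)%nat)%R) /\
  (Series (fun n : nat => (INR (n + 1) * b (n + 2)%nat)%R) <= 1)%R.
Proof. set (t := fun n : nat => (INR (n + 1) * b (n + 2)%nat)%R).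
  assert (Ht : forall n, 0 <= t n).
  { intros n. unfold t. apply Rmult_le_pos. apply pos_INR. apply Hb; lia. }
  assert (Hb1 : forall M, sum_n t M <= 1).
  { intros M. unfold t. rewrite <- shift. apply partial_1. }
  assert (Hinc : forall M, sum_n t M <= sum_n t (S M)).
  { intros M. rewrite sum_Sn. unfold plus; simpl. pose proof (Ht (S M)). lra. }
  destruct (ex_finite_lim_seq_incr _ 1 Hinc Hb1) as [l Hl].
  assert (Hs' : is_series t l) by exact Hl.
  split. exists l. exact Hs'.
  rewrite (is_series_unique _ _ Hs').
  pose proof (is_lim_seq_le _ _ _ _ Hb1 Hl (is_lim_seq_const 1)). simpl in H. exact H. Qed.
End Fin.
End FinS.
Open Scope C_scope.

Theorem theorem5p1 (f : C -> C) (b1 : C) (b : nat -> R) :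
  classA f ->
  (forall n : nat, (2 <= n)%nat -> (0 <= b n)%R) ->
  (forall z : C, in_disk z -> z <> 0 ->
     is_series (fun n : nat => zf_coef b1 b n * Cpow z n) (z / f z)) ->
  (univalent_in_disk f <->
   (ex_series (fun n : nat => (INR (n + 1) * b (n + 2)%nat)%R) /\
    (Series (fun n : nat => (INR (n + 1) * b (n + 2)%nat)%R) <= 1)%R)).
Proof.
  intros HA Hb Hs. split.
  - intros Hu. exact (necessity f b1 b Hb Hs Hu).
  - intros [Hex HS]. exact (suff f b1 b HA Hb Hs Hex HS).
Qed.
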